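(* Let $X=\{F=0\}\subset\mathbb{P}^n$ be a Frobenius nonclassical hypersurface over $\mathbb{F}_q$ which is irreducible over $\mathbb{F}_q$ and contains an $\mathbb{F}_q$-point at which $X$ is smooth. Then $X$ is geometrically irreducible.
   Context: $X$ is Frobenius nonclassical if $F$ divides $\sum_{i=0}^n x_i^q\frac{\partial F}{\partial x_i}$. *)

(* Defs.v *)
From HB Require Import structures.
From mathcomp Require Import all_boot all_order all_algebra all_field.
From mathcomp Require Import mpoly.
Set Implicit Arguments. Unset Strict Implicit. Unset Printing Implicit Defensive.
Import GRing.Theory.
Local Open Scope ring_scope.

Definition mirreducible (R : idomainType) (n : nat) (p : {mpoly R[n]}) : Prop :=
  [/\ p != 0, p \isn't a GRing.unit &
      forall a b : {mpoly R[n]}, p = a * b -> a \is a GRing.unit \/ b \is a GRing.unit].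

Definition frobenius_nonclassical (K : finFieldType) (n : nat) (F : {mpoly K[n.+1]}) : Prop :=
  exists h : {mpoly K[n.+1]},
    \sum_(i < n.+1) 'X_i ^+ #|K| * (mderiv i F) = h * F.

Definition has_smooth_rational_point (K : fieldType) (n : nat) (F : {mpoly K[n.+1]}) : Prop :=
  exists a : 'I_n.+1 -> K,
    [/\ exists i, a i != 0, F.@[a] = 0 & exists i, (mderiv i F).@[a] != 0].

(* X = {F = 0} is geometrically irreducible: over any algebraically closed
   field L containing K, the defining form is (up to a constant) a power of
   a single irreducible polynomial, i.e. its zero set is irreducible. *)
Definition geometrically_irreducible (K : fieldType) (n : nat) (F : {mpoly K[n.+1]}) : Prop :=
  forall (L : closedFieldType) (f : {rmorphism K -> L}),
    exists (G : {mpoly L[n.+1]}) (c : L) (m : nat),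
      [/\ mirreducible G, c != 0 & map_mpoly f F = c *: G ^+ m].

(* Main.v *)
From Stdlib Require Import Classical.
Require Import Defs.
From HB Require Import structures.
From mathcomp Require Import all_boot all_order all_algebra all_field all_fingroup all_solvable.
From mathcomp Require Import mpoly.
From mathcomp Require Import ring.
Set Implicit Arguments. Unset Strict Implicit. Unset Printing Implicit Defensive.
Import GRing.Theory.
Local Open Scope ring_scope.


Definition dvd (R : comNzRingType) (x y : R) : Prop := exists z, y = x * z.
Definition irrd (R : idomainType) (x : R) : Prop :=
  [/\ x != 0, x \isn't a GRing.unit &
      forall a b : R, x = a * b -> a \is a GRing.unit \/ b \is a GRing.unit].
Definition primeish (R : idomainType) (x : R) : Prop :=
  forall a b : R, dvd x (a * b) -> dvd x a \/ dvd x b.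

Lemma poly_split (R : nzRingType) (Y : {poly R}) :
  exists Y1 : {poly R}, Y = Y1 * 'X + (Y`_0)%:P /\ (Y != 0 -> (size Y1 < size Y)%N).
Proof.
exists (\poly_(i < (size Y).-1) Y`_i.+1); split.
  apply/polyP => i; rewrite coefD coefMX coefC coef_poly.
  case: i => [|i] /=; first by rewrite add0r.
  rewrite addr0; case: ltnP => // H.
  by rewrite nth_default //; move: H; case: (size Y).
move=> Y0; apply: (leq_ltn_trans (size_poly _ _)).
by rewrite prednK // lt0n size_poly_eq0.
Qed.

Section PolyPrime.
Variable D : idomainType.
Variable p : D.
Hypothesis p0 : p != 0.
Hypothesis pp : primeish p.

Lemma shift_aux (Y Y1 Z W : {poly D}) (y' : D) :
  Y = Y1 * 'X + (p * y')%:P -> Y * Z = p%:P * W -> exists V, Y1 * Z = p%:P * V.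
Proof.
move=> -> E.
have E2 : (Y1 * Z) * 'X = p%:P * (W - y'%:P * Z).
  by rewrite mulrBr -E polyCM; ring.
have W0 : (W - y'%:P * Z)`_0 = 0.
  have := congr1 (fun q : {poly D} => q`_0) E2; rewrite /= coefMX /= coefCM => /esym/eqP.
  by rewrite mulf_eq0 (negbTE p0) => /eqP.
have [V [HV _]] := poly_split (W - y'%:P * Z).
exists V; apply: (@mulIf _ 'X); first by rewrite polyX_eq0.
by rewrite E2 HV W0 addr0; ring.
Qed.

Lemma pconst_prime_aux k : forall Y Z W : {poly D}, (size Y + size Z <= k)%N ->
  Y * Z = p%:P * W -> dvd p%:P Y \/ dvd p%:P Z.
Proof.
elim: k => [|k IH] Y Z W Hk E.
  left; exists 0; rewrite mulr0; apply/eqP; rewrite -size_poly_eq0.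
  by move: Hk; rewrite leqn0 addn_eq0 => /andP[].
have [->|Y0] := eqVneq Y 0; first by left; exists 0; rewrite mulr0.
have [->|Z0] := eqVneq Z 0; first by right; exists 0; rewrite mulr0.
have [Y1 [HY sY]] := poly_split Y.
have [Z1 [HZ sZ]] := poly_split Z.
case: (classic (dvd p (Y`_0))) => [[y' Hy]|nY].
  rewrite Hy in HY.
  have [V HV] := shift_aux HY E.
  have Hk' : (size Y1 + size Z <= k)%N.
    by move: (sY Y0) Hk => a b; rewrite -ltnS; apply: leq_trans b; rewrite ltn_add2r.
  case: (IH _ _ _ Hk' HV) => [[Y1' HY1]|]; last by right.
  left; exists (Y1' * 'X + y'%:P); rewrite HY HY1 polyCM; ring.
case: (classic (dvd p (Z`_0))) => [[z' Hz]|nZ].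
  rewrite Hz in HZ.
  have [V HV] := shift_aux HZ (etrans (mulrC _ _) E).
  have Hk' : (size Y + size Z1 <= k)%N.
    by move: (sZ Z0) Hk => a b; rewrite -ltnS; apply: leq_trans b; rewrite ltn_add2l.
  case: (IH _ _ _ Hk' (etrans (mulrC _ _) HV)) => [|[Z1' HZ1]]; first by left.
  right; exists (Z1' * 'X + z'%:P); rewrite HZ HZ1 polyCM; ring.
have : dvd p (Y`_0 * Z`_0) by exists W`_0; rewrite -coef0M E coefCM.
by case/pp.
Qed.

Lemma pconst_prime (Y Z W : {poly D}) :
  Y * Z = p%:P * W -> dvd p%:P Y \/ dvd p%:P Z.
Proof. exact: (@pconst_prime_aux (size Y + size Z)). Qed.

End PolyPrime.

Section Gauss.
Variable D : idomainType.
Variable mu : D -> nat.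
Hypothesis mu_dec : forall a b : D, a != 0 -> a \isn't a GRing.unit -> b != 0 ->
  (mu b < mu (a * b))%N.
Hypothesis Dprime : forall x : D, irrd x -> primeish x.

Lemma irr_factor (c : D) : c != 0 -> c \isn't a GRing.unit ->
  exists q c', irrd q /\ c = q * c'.
Proof.
have [k] := ubnP (mu c); elim: k c => // k IH c /ltnSE Hk c0 cu.
case: (classic (forall a b, c = a * b -> a \is a GRing.unit \/ b \is a GRing.unit)) => H.
  exists c, 1; rewrite mulr1; split => //; by split.
have [a Ha0] := not_all_ex_not _ _ H.
have [b Hb] := not_all_ex_not _ _ Ha0.
have [Eab Hab] := imply_to_and _ _ Hb.
have [au bu] := not_or_and _ _ Hab.
have a0 : a != 0 by apply: contraNneq c0 => a0; rewrite Eab a0 mul0r.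
have b0 : b != 0 by apply: contraNneq c0 => b0; rewrite Eab b0 mulr0.
have Hmu : (mu a < k)%N.
  apply: leq_trans Hk; rewrite Eab mulrC; apply: mu_dec => //; exact/negP.
have [q [a' [Hq Ha]]] := IH a Hmu a0 (introN idP au).
by exists q, (a' * b); split => //; rewrite Eab Ha mulrA.
Qed.

Lemma irrd_neq0 (x : D) : irrd x -> x != 0. Proof. by case. Qed.

Lemma peel (c : D) : forall X G M : {poly D}, c != 0 -> c%:P * X = G * M ->
  exists a b G' M', [/\ G = a%:P * G', M = b%:P * M' & X = G' * M'].
Proof.
have [k] := ubnP (mu c); elim: k c => // k IH c /ltnSE Hk X G M c0 E.
case: (boolP (c \is a GRing.unit)) => cu.
  exists c, 1, (c^-1%:P * G), M; split.
  - by rewrite mulrA -polyCM mulrV // mul1r.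
  - by rewrite mul1r.
  - by rewrite -mulrA -E mulrA -polyCM mulVr // mul1r.
have [q [c' [Hq Hc]]] := irr_factor c0 cu.
have q0 := irrd_neq0 Hq.
have c'0 : c' != 0 by apply: contraNneq c0 => c'0; rewrite Hc c'0 mulr0.
have Hmu : (mu c' < k)%N.
  apply: leq_trans Hk; rewrite Hc; apply: mu_dec => //; by case: Hq.
have qP0 : q%:P != 0 :> {poly D} by rewrite polyC_eq0.
have E' : G * M = q%:P * (c'%:P * X) by rewrite -E Hc polyCM mulrA.
case: (pconst_prime q0 (Dprime Hq) E') => [[G0 HG]|[M0 HM]].
  have E2 : c'%:P * X = G0 * M.
    by apply: (mulfI qP0); rewrite -E' HG mulrA.
  have [a [b [G' [M' [H1 H2 H3]]]]] := IH c' Hmu X G0 M c'0 E2.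
  by exists (q * a), b, G', M'; split => //; rewrite HG H1 polyCM mulrA.
have E2 : c'%:P * X = G * M0.
  by apply: (mulfI qP0); rewrite -E' HM mulrCA.
have [a [b [G' [M' [H1 H2 H3]]]]] := IH c' Hmu X G M0 c'0 E2.
by exists a, (q * b), G', M'; split => //; rewrite HM H2 polyCM mulrA.
Qed.

Lemma polyC_unit (a : D) : (a%:P \is a GRing.unit) = (a \is a GRing.unit).
Proof.
rewrite poly_unitE coefC /= size_polyC.
have [->|a0] := eqVneq a 0; first by rewrite unitr0.
by [].
Qed.

Lemma peel2 (A X T : {poly D}) (c : D) : irrd A -> (1 < size A)%N -> c != 0 ->
  c%:P * X = A * T -> dvd A X.
Proof.
move=> [A0 Au HA] sA c0 E.
have [a [b [G' [M' [H1 H2 H3]]]]] := peel c0 E.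
have a0 : a != 0 by apply: contraNneq A0 => a0; rewrite H1 a0 mul0r.
case: (boolP (a \is a GRing.unit)) => au.
  by exists (a^-1%:P * M'); rewrite H3 H1 mulrACA -polyCM mulrV // mul1r.
case: (HA _ _ H1); first by rewrite polyC_unit (negbTE au).
rewrite poly_unitE => /andP[/eqP sG _].
by move: sA; rewrite H1 size_Cmul // sG.
Qed.

Lemma poly_irr_prime (A : {poly D}) : irrd A -> primeish A.
Proof.
move=> HA P Q [W HW]; have [A0 Au HAf] := HA.
case: (leqP (size A) 1) => sA.
  have EA := size1_polyC sA; set a := A`_0 in EA.
  have Ha : irrd a.
    split.
    - by apply: contraNneq A0 => a0; rewrite EA a0.
    - by apply: contraNN Au => au; rewrite EA polyC_unit.
    - move=> x y Exy; case: (HAf x%:P y%:P); first by rewrite EA Exy polyCM.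
      + by rewrite polyC_unit; left.
      + by rewrite polyC_unit; right.
  have a0 : a != 0 by case: Ha.
  rewrite EA in HW *.
  exact: (pconst_prime a0 (Dprime Ha) HW).
have main : forall k (G U V : {poly D}), G = U * A + V * P -> G != 0 ->
    (size G <= k)%N -> dvd A P \/ dvd A Q.
  elim=> [|k IH] G U V EG G0 sG.
    by move: sG; rewrite leqn0 size_poly_eq0 (negbTE G0).
  have E1 := Pdiv.Idomain.divp_eq A G.
  set c := lead_coef G ^+ _ in E1.
  have c0 : c != 0 := Pdiv.Idomain.lc_expn_scalp_neq0 _ _.
  have [R0|R0] := eqVneq (A %% G) 0; last first.
    apply: (IH (A %% G) (c%:P - (A %/ G) * U) (- ((A %/ G) * V))) => //.
    - have ER : A %% G = c *: A - (A %/ G) * G by rewrite E1; ring.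
      by rewrite ER EG -mul_polyC; ring.
    - by rewrite -ltnS; apply: leq_trans sG; exact: Pdiv.Idomain.ltn_modpN0.
  have E2 : c%:P * A = G * (A %/ G) by rewrite mul_polyC E1 R0 addr0 mulrC.
  have [a [b [G' [M' [H1 H2 H3]]]]] := peel c0 E2.
  have a0 : a != 0 by apply: contraNneq G0 => a0; rewrite H1 a0 mul0r.
  case: (HAf _ _ H3) => Hu.
    move: Hu; rewrite poly_unitE => /andP[/eqP sG' _].
    have EG' := size1_polyC (eq_leq sG'); set g := G'`_0 in EG'.
    right; apply: (@peel2 A Q (U * Q + V * W) (a * g)) => //.
    - by apply: contraNneq G0 => ag0; rewrite H1 EG' -polyCM ag0.
    - rewrite polyCM -EG' -H1 EG mulrDl; rewrite -[V * P * Q]mulrA HW; ring.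
  have EG'' : G' = A * M'^-1 by rewrite H3 mulrK.
  have E3 := Pdiv.Idomain.divp_eq P G.
  set c2 := lead_coef G ^+ _ in E3.
  have c20 : c2 != 0 := Pdiv.Idomain.lc_expn_scalp_neq0 _ _.
  have [R2|R2] := eqVneq (P %% G) 0; last first.
    apply: (IH (P %% G) (- ((P %/ G) * U)) (c2%:P - (P %/ G) * V)) => //.
    - have ER : P %% G = c2 *: P - (P %/ G) * G by rewrite E3; ring.
      by rewrite ER EG -mul_polyC; ring.
    - by rewrite -ltnS; apply: leq_trans sG; exact: Pdiv.Idomain.ltn_modpN0.
  left; apply: (@peel2 A P (M'^-1 * a%:P * (P %/ G)) c2) => //.
  by rewrite mul_polyC E3 R2 addr0 H1 EG''; ring.
have [->|P0] := eqVneq P 0; first by left; exists 0; rewrite mulr0.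
by apply: (main (size P) P 0 1) => //; rewrite mul0r add0r mul1r.
Qed.

End Gauss.
Arguments mwiden : simpl never.
Section Iso.
Variable (n : nat) (R : idomainType).

Definition mm (p : {poly {mpoly R[n]}}) : {mpoly R[n.+1]} :=
  (map_poly (@mwiden n R) p).['X_ord_max].

Arguments mm : simpl never.

Lemma mm_is_additive : additive mm.
Proof. by move=> p q; rewrite /mm rmorphB hornerD hornerN. Qed.

HB.instance Definition _ :=
  GRing.isAdditive.Build {poly {mpoly R[n]}} {mpoly R[n.+1]} mm mm_is_additive.

Lemma mm_is_multiplicative : multiplicative mm.
Proof.
split => [p q|]; first by rewrite /mm rmorphM hornerM.
by rewrite /mm rmorph1 hornerC.
Qed.

HB.instance Definition _ :=
  GRing.isMultiplicative.Build {poly {mpoly R[n]}} {mpoly R[n.+1]} mm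
    mm_is_multiplicative.

Lemma muni_mwiden (c : {mpoly R[n]}) : muni (mwiden c) = c%:P.
Proof.
rewrite {1}(mpolyE c) (raddf_sum (@mwiden n R)) (raddf_sum (@muni n R)).
rewrite [in RHS](mpolyE c) raddf_sum.
apply: eq_bigr => m _.
rewrite /= -mul_mpolyC rmorphM /= mwidenC mwidenX mul_mpolyC muniZ muniE msuppX big_seq1 mcoeffX eqxx scale1r.
rewrite mnmwiden_ordmax expr0.
have -> : [multinom mnmwiden m (widen_ord (leqnSn n) i) | i < n] = m.
  by apply/mnmP => i; rewrite mnmE mnmwiden_widen.
by rewrite -!mul_polyC mulr1 -polyCM mul_mpolyC.
Qed.

Lemma muni_Xmax : muni ('X_ord_max : {mpoly R[n.+1]}) = 'X.
Proof.
rewrite muniE msuppX big_seq1 mcoeffX eqxx scale1r mnm1E eqxx expr1.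
have -> : [multinom ((U_(ord_max))%MM : 'X_{1..n.+1}) (widen_ord (leqnSn n) i) | i < n] = 0%MM.
  apply/mnmP => i; rewrite !mnmE; case: eqP => // /(congr1 val) /= E.
  by move: (ltn_ord i); rewrite -E ltnn.
by rewrite mpolyX0 scale1r.
Qed.

Lemma muni_mm p : muni (mm p) = p.
Proof.
rewrite /mm horner_coef size_map_inj_poly; last exact: mwiden0.
  rewrite raddf_sum /= -[RHS]coefK poly_def; apply: eq_bigr => i _.
  by rewrite coef_map rmorphM rmorphXn /= muni_mwiden muni_Xmax mul_polyC.
exact: inj_mwiden.
Qed.

Lemma mm_muni q : mm (muni q) = q.
Proof.
rewrite {1}(mpolyE q) (raddf_sum (@muni n R)) (raddf_sum mm) [in RHS](mpolyE q).
apply: eq_bigr => m _.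
rewrite /= -mul_mpolyC !rmorphM /= muniC {1}/mm map_polyC hornerC /= mwidenC.
congr (_ * _); rewrite mpolyXE_id !rmorph_prod /=; apply: eq_bigr => i _.
rewrite !rmorphXn /=; congr (_ ^+ _).
rewrite muniE msuppX big_seq1 mcoeffX eqxx scale1r -mul_polyC rmorphM rmorphXn /=.
rewrite {1}/mm map_polyC hornerC {1}/mm map_polyX hornerX /= mwidenX.
case: (ltnP i n) => Hi.
  have -> : i = widen_ord (leqnSn n) (Ordinal Hi) by apply/val_inj.
  set j := Ordinal Hi.
  have -> : [multinom ((U_(widen_ord (leqnSn n) j))%MM : 'X_{1..n.+1}) (widen_ord (leqnSn n) i) | i < n] = U_(j)%MM.
    by apply/mnmP => k; rewrite !mnmE -!val_eqE.
  rewrite mnm1E.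
  have -> : (widen_ord (leqnSn n) j == ord_max) = false.
    by rewrite -val_eqE /= ltn_eqF.
  by rewrite expr0 mulr1 mnmwiden1.
have -> : i = ord_max by apply/val_inj => /=; apply/eqP; rewrite eqn_leq Hi -ltnS ltn_ord.
have -> : [multinom ((U_(ord_max))%MM : 'X_{1..n.+1}) (widen_ord (leqnSn n) i) | i < n] = 0%MM.
  apply/mnmP => i0; rewrite !mnmE; case: eqP => // /(congr1 val) /= E.
  by move: (ltn_ord i0); rewrite -E ltnn.
by rewrite mnm1E eqxx expr1 mnmwiden0 mpolyX0 mul1r.
Qed.

Lemma mm_unit p : p \is a GRing.unit -> mm p \is a GRing.unit.
Proof. by move=> H; have := rmorph_unit mm H. Qed.

Lemma muni_unit (p : {mpoly R[n.+1]}) : p \is a GRing.unit -> muni p \is a GRing.unit.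
Proof. by move=> H; have := rmorph_unit (@muni n R) H. Qed.

Lemma mmM p q : mm (p * q) = mm p * mm q.
Proof. exact: (rmorphM mm). Qed.

Lemma mm0 : mm 0 = 0.
Proof. exact: (rmorph0 mm). Qed.

End Iso.

Section MPrime.
Variable L : fieldType.

Lemma mpoly_small_unit n (a : {mpoly L[n]}) : a != 0 -> (msize a <= 1)%N ->
  a \is a GRing.unit.
Proof.
move=> a0 sa; have Ea := msize1_polyC sa.
have c0 : a@_0 != 0 by apply: contraNneq a0 => c0; rewrite Ea c0.
by apply/andP; split; [rewrite -Ea | rewrite unitfE].
Qed.

Lemma mu_dec_mpoly n (a b : {mpoly L[n]}) : a != 0 -> a \isn't a GRing.unit ->
  b != 0 -> (msize b < msize (a * b))%N.
Proof.
move=> a0 au b0; rewrite msizeM //.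
have sa : (1 < msize a)%N.
  by rewrite ltnNge; apply: contraNN au; exact: mpoly_small_unit.
have sb : (0 < msize b)%N by rewrite lt0n msize_poly_eq0.
by case: (msize a) sa => // [[|k]] //= _; rewrite addSn /=; apply: leq_trans (leq_addl _ _).
Qed.

Theorem mpoly_irr_prime n : forall A : {mpoly L[n]}, irrd A -> primeish A.
Proof.
elim: n => [|n IH] A [A0 Au HA].
  exfalso; apply/negP: Au; rewrite negbK; apply: mpoly_small_unit => //.
  rewrite (nvar0_mpolyC A) msizeC; by case: (_ == 0).
have HmA : irrd (muni A).
  split.
  - by apply: contraNneq A0 => E; rewrite -(mm_muni A) E mm0.
  - by apply: contraNN Au => /mm_unit; rewrite mm_muni.
  - move=> a b E; have : A = mm a * mm b.
      by rewrite -mmM -E mm_muni.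
    case/HA => /muni_unit; rewrite muni_mm; by [left|right].
have Pm := poly_irr_prime (@mu_dec_mpoly n) IH HmA.
move=> P Q [W HW].
have E1 := muniM P Q.
have E2 := muniM A W.
have E3 : muni (P * Q) = muni (A * W) by rewrite HW.
have E4 : dvd (muni A) (muni P * muni Q).
  exists (muni W); exact: (etrans (esym E1) (etrans E3 E2)).
have F4 := mm_muni A.
case/Pm: E4 => [[z Hz]|[z Hz]]; [left|right]; exists (mm z).
  have F1 := mm_muni P.
  have F2 := congr1 (@mm n L) Hz.
  have F3 := mmM (muni A) z.
  exact: (etrans (esym F1) (etrans F2 (etrans F3 (congr1 (fun x => x * mm z) F4)))).
have F1 := mm_muni Q.
have F2 := congr1 (@mm n L) Hz.
have F3 := mmM (muni A) z.
exact: (etrans (esym F1) (etrans F2 (etrans F3 (congr1 (fun x => x * mm z) F4)))).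
Qed.

End MPrime.
Arguments map_mpoly : simpl never.

Section MapLemmas.
Variables (R S : fieldType) (g : {rmorphism R -> S}) (n : nat).

Lemma meval_map (v : 'I_n -> R) (p : {mpoly R[n]}) :
  (map_mpoly g p).@[fun i => g (v i)] = g p.@[v].
Proof.
rewrite !mevalE (perm_big _ (msupp_map_mpoly _ (fmorph_inj g))) rmorph_sum.
apply: eq_bigr => m _; rewrite mcoeff_map_mpoly rmorphM rmorph_prod; congr (_ * _).
by apply: eq_bigr => i _; rewrite rmorphXn.
Qed.

Lemma mderiv_map i (p : {mpoly R[n]}) :
  mderiv i (map_mpoly g p) = map_mpoly g (mderiv i p).
Proof.
by apply/mpolyP => m; rewrite mcoeff_mderiv !mcoeff_map_mpoly mcoeff_mderiv raddfMn.
Qed.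

Lemma map_mpoly_inj : injective (@map_mpoly n R S g).
Proof.
move=> p q E; apply/mpolyP => m; apply: (fmorph_inj g).
by rewrite -!mcoeff_map_mpoly E.
Qed.

Lemma msize_map (p : {mpoly R[n]}) : msize (map_mpoly g p) = msize p.
Proof. by rewrite !msizeE (perm_big _ (msupp_map_mpoly _ (fmorph_inj g))). Qed.

End MapLemmas.

Lemma descend (K : finFieldType) (L : fieldType) (f : {rmorphism K -> L}) n
  (P : {mpoly L[n]}) : (forall m, exists k, f k = P@_m) ->
  exists P0, P = map_mpoly f P0.
Proof.
move=> HP; pose pre (y : L) : K := odflt 0 [pick k | f k == y].
have preK m : f (pre P@_m) = P@_m.
  rewrite /pre; case: pickP => [k /eqP //|H].
  by have [k Hk] := HP m; move: (H k); rewrite Hk eqxx.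
exists (\sum_(m <- msupp P) pre P@_m *: 'X_[m]).
rewrite raddf_sum /= [LHS]mpolyE; apply: eq_bigr => m _.
by rewrite map_mpolyZ map_mpolyX preK.
Qed.

Lemma ex_min (P : nat -> Prop) : (exists k, P k) ->
  exists k, P k /\ forall j, (j < k)%N -> ~ P j.
Proof.
move=> [k Hk]; elim/ltn_ind: k Hk => k IH Hk.
case: (classic (exists j, (j < k)%N /\ P j)) => [[j [Hj Pj]]|H].
  exact: IH Pj.
by exists k; split => // j Hj Pj; apply: H; exists j.
Qed.

Section Frob.
Variables (K : finFieldType) (L : closedFieldType) (f : {rmorphism K -> L}).
Hypothesis HqD : forall x y : L, (x + y) ^+ #|K| = x ^+ #|K| + y ^+ #|K|.

Definition frob (x : L) := x ^+ #|K|.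

Lemma frob_is_additive : additive frob.
Proof.
move=> x y; rewrite /frob; apply/eqP; rewrite eq_sym subr_eq -HqD.
by rewrite addrNK.
Qed.

HB.instance Definition _ := GRing.isAdditive.Build L L frob frob_is_additive.

Lemma frob_is_multiplicative : multiplicative frob.
Proof. by split => [x y|]; rewrite /frob ?exprMn ?expr1n. Qed.

HB.instance Definition _ := GRing.isMultiplicative.Build L L frob
  frob_is_multiplicative.

Lemma frob_f k : frob (f k) = f k.
Proof. by rewrite /frob -rmorphXn expf_card. Qed.

Lemma frob_fixed x : frob x = x -> exists k, f k = x.
Proof.
move=> Hx; have H := congr1 (fun p => (map_poly f p).[x]) (finField_genPoly K).
move: H => /=; rewrite rmorphB /= map_polyXn map_polyX !hornerE.
rewrite rmorph_prod horner_prod.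
have -> : x ^+ #|K| - x = 0 by rewrite -/(frob x) Hx subrr.
move=> /esym/eqP/prodf_eq0 [k _]; rewrite /= map_polyXsubC hornerXsubC subr_eq0 => /eqP ->.
by exists k.
Qed.

Lemma unit_meval_nz n (b : 'I_n -> L) (u : {mpoly L[n]}) :
  u \is a GRing.unit -> u.@[b] != 0.
Proof.
case/unitrP => v [Hvu _]; apply/eqP => H; move: (congr1 (meval b) Hvu).
by rewrite mevalM H mulr0 meval1 => /eqP; rewrite eq_sym oner_eq0.
Qed.

Lemma main_sec n (F : {mpoly K[n]}) (a : 'I_n -> K) (j : 'I_n) :
  irrd F -> F.@[a] = 0 -> (mderiv j F).@[a] != 0 ->
  exists (G : {mpoly L[n]}) (c : L) (m : nat),
    [/\ irrd G, c != 0 & map_mpoly f F = c *: G ^+ m].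
Proof.
move=> HF Fa Dj.
set FL := map_mpoly f F.
set b : 'I_n -> L := fun i => f (a i).
have FL0 : FL != 0.
  by apply: contraNneq (let: And3 x _ _ := HF in x) => E;
     apply/eqP; apply: (@map_mpoly_inj _ _ f); rewrite -/FL E raddf0.
have FLb : FL.@[b] = 0 by rewrite meval_map Fa rmorph0.
have DFL : (mderiv j FL).@[b] != 0 by rewrite mderiv_map meval_map fmorph_eq0.
have [k0 [[A [dA Ab sA]] Hmin]] := ex_min (ex_intro
  (fun k => exists A, [/\ dvd A FL, A.@[b] = 0 & msize A = k]) (msize FL)
  (ex_intro _ FL (And3 (ex_intro _ 1 (esym (mulr1 FL))) FLb erefl))).
have minA : forall B, dvd B FL -> B.@[b] = 0 -> (msize A <= msize B)%N.
  move=> B dB Bb; rewrite leqNgt; apply/negP => H.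
  by apply: (Hmin (msize B)); [rewrite -sA | exists B].
have min_irrd : forall A, dvd A FL -> A.@[b] = 0 ->
    (forall B, dvd B FL -> B.@[b] = 0 -> (msize A <= msize B)%N) -> irrd A.
  move=> A1 [z Hz] A1b minA1.
  have A10 : A1 != 0 by apply: contraNneq FL0 => E; rewrite Hz E mul0r.
  split => //.
    by apply/negP => /(unit_meval_nz b); rewrite A1b eqxx.
  move=> x y Exy.
  have x0 : x != 0 by apply: contraNneq A10 => E; rewrite Exy E mul0r.
  have y0 : y != 0 by apply: contraNneq A10 => E; rewrite Exy E mulr0.
  move: A1b; rewrite Exy mevalM => /eqP; rewrite mulf_eq0 => /orP[] /eqP H.
    right; apply/negPn/negP => yu.
    have dx : dvd x FL by exists (y * z); rewrite Hz Exy mulrA.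
    have := minA1 x dx H.
    by rewrite Exy mulrC leqNgt (mu_dec_mpoly y0 yu x0).
  left; apply/negPn/negP => xu.
  have dy : dvd y FL by exists (x * z); rewrite Hz Exy mulrCA mulrA.
  have := minA1 y dy H.
  by rewrite Exy leqNgt (mu_dec_mpoly x0 xu y0).
have irrA := min_irrd A dA Ab minA.
pose sg := map_mpoly (n:=n) frob.
have sFL : sg FL = FL.
  by apply/mpolyP => m; rewrite !mcoeff_map_mpoly /= frob_f.
have sgb : forall P, (sg P).@[b] = frob P.@[b].
  move=> P; rewrite -meval_map; apply: meval_eq => i.
  by rewrite /b /= frob_f.
have dsA : dvd (sg A) FL.
  by case: dA => z Hz; exists (sg z); rewrite -{1}sFL Hz /sg rmorphM.
have sAb : (sg A).@[b] = 0 by rewrite sgb Ab rmorph0.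
have ssA : msize (sg A) = msize A by rewrite msize_map.
have minsA : forall B, dvd B FL -> B.@[b] = 0 -> (msize (sg A) <= msize B)%N.
  by rewrite ssA.
have irrsA := min_irrd (sg A) dsA sAb minsA.
have [z Hz] := dsA.
have [w0 Hw0] := dA.
have dd : dvd A (sg A * z) by exists w0; rewrite -Hz.
have [[C HC]|[w Hw]] := mpoly_irr_prime irrA dd; last first.
  exfalso; move: DFL; rewrite Hz Hw !(mderivM, mevalD, mevalM) sAb Ab.
  by rewrite !(mul0r, mulr0, add0r, addr0) eqxx.
have [_ Au0 HAf'] := irrsA.
have [_ Au _] := irrA.
have A0 : A != 0 by case: irrA.
case: (HAf' _ _ HC) => [Au1|Cu]; first by rewrite Au1 in Au.
have /andP [/eqP EC cu] : (C == (C@_0)%:MP) && (C@_0 \is a GRing.unit) := Cu.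
set c := C@_0 in EC cu.
have c0 : c != 0 by rewrite -unitfE.
have Hcoef : forall m, frob A@_m = c * A@_m.
  move=> m; rewrite -[frob _]/((frob : {rmorphism L -> L}) A@_m) -mcoeff_map_mpoly.
  by rewrite -/(sg A) HC EC mulrC mul_mpolyC mcoeffZ.
set l := A@_(mlead A).
have l0 : l != 0 by rewrite -/(mleadc A) mleadc_eq0.
set A' := l^-1 *: A.
have A'0 : A' != 0 by rewrite mscalerI negb_or invr_eq0 l0.
have fixA' : forall m, frob A'@_m = A'@_m.
  move=> m; rewrite /A' mcoeffZ rmorphM fmorphV /= !Hcoef.
  by rewrite invfM mulrACA mulVf // mul1r.
have sA' : sg A' = A'.
  by apply/mpolyP => m; rewrite mcoeff_map_mpoly /= fixA'.
have [A0' EA0] := descend (fun m => frob_fixed (fixA' m)).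
set B2 := l *: w0.
have EFL : FL = A' * B2.
  by rewrite Hw0 /A' /B2 -scalerAl -scalerAr scalerA mulVf // scale1r.
have sB2 : sg B2 = B2.
  apply: (mulfI A'0); rewrite -EFL -{1}sA' -rmorphM -EFL //.
have fixB2 : forall m, frob B2@_m = B2@_m.
  by move=> m; rewrite -{2}sB2 mcoeff_map_mpoly.
have [B0 EB0] := descend (fun m => frob_fixed (fixB2 m)).
have EF : F = A0' * B0.
  by apply: (@map_mpoly_inj _ _ f); rewrite rmorphM /= -EA0 -EB0 -EFL.
have [_ _ HFf] := HF.
case: (HFf _ _ EF) => [A0u|B0u].
  have := unit_meval_nz b (rmorph_unit (map_mpoly f) A0u).
  by rewrite /= -EA0 /A' mevalZ Ab mulr0 eqxx.
have B2u : B2 \is a GRing.unit by rewrite EB0; exact: (rmorph_unit (map_mpoly f)).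
have /andP [/eqP EB2 eu] : (B2 == (B2@_0)%:MP) && (B2@_0 \is a GRing.unit) := B2u.
set e := B2@_0 in EB2 eu.
exists A, (e * l^-1), 1%N; split.
- exact: irrA.
- by rewrite mulf_eq0 negb_or -unitfE eu invr_eq0 l0.
- rewrite EFL EB2 mulrC mul_mpolyC /A' scalerA expr1.
  by [].
Qed.
End Frob.

Unset Implicit Arguments.

Theorem lemma2p6 (K : finFieldType) (n d : nat) (F : {mpoly K[n.+1]}) :
  F \is d.-homog ->
  mirreducible F ->
  frobenius_nonclassical F ->
  has_smooth_rational_point F ->
  geometrically_irreducible F.
Proof.
move=> _ HF _ [a [_ Fa [j Dj]]] L f.
have HqD : forall x y : L, (x + y) ^+ #|K| = x ^+ #|K| + y ^+ #|K|.
  have [p pr cp] := finPcharP K.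
  have cpL := rmorph_pchar f cp.
  have Hn : p.-nat #|K|.
    by have := abelem_pgroup (fin_ring_pchar_abelem cp); rewrite /pgroup cardsT.
  move=> x y; apply: exprDn_pchar; rewrite (eq_pnat _ (pcharf_eq cpL)); exact: Hn.
have HF' : irrd F.
  by case: HF => H1 H2 H3; split.
exact: (@main_sec K L f HqD n.+1 F a j HF' Fa Dj).
Qed.
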